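(* Let $R$ be a ring, $S$ an $R$-algebra, and $\omega_{S/R}\colon R[[t]]\otimes_RS\to S[[t]]$ the natural map. The image of $\omega_{S/R}$ is the subring of series $\sum_ns_nt^n\in S[[t]]$ for which there exists a finitely generated $R$-submodule $M\subseteq S$ with $s_n\in M$ for all $n\in\mathbb{N}$. If every finitely generated $R$-submodule of $S$ is contained in a finitely presented $R$-submodule of $S$, then $\omega_{S/R}$ is injective. *)

(* Defs.v *)
From HB Require Import structures.
From mathcomp Require Import all_boot all_order all_algebra.
Set Implicit Arguments. Unset Strict Implicit. Unset Printing Implicit Defensive.
Import Order.TTheory GRing.Theory Num.Theory.
Local Open Scope ring_scope.

Definition pseries (A : Type) := nat -> A.

Section Defs.
Variables (R : comPzRingType) (S : comAlgType R).

Definition spanned_by (M : S -> Prop) (n : nat) (m : 'I_n -> S) : Prop :=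
  forall x, M x <-> exists c : 'I_n -> R, x = \sum_(i < n) c i *: m i.

Definition fg_submod (M : S -> Prop) : Prop :=
  exists n (m : 'I_n -> S), spanned_by M m.

Definition fp_submod (M : S -> Prop) : Prop :=
  exists n (m : 'I_n -> S), spanned_by M m /\
    exists k (rel : 'I_k -> 'I_n -> R),
      forall c : 'I_n -> R,
        (\sum_(i < n) c i *: m i = 0) <->
        exists d : 'I_k -> R, forall i, c i = \sum_(j < k) d j * rel j i.

(* Elements are represented by finite formal sums  sum_k f_k (x) s_k ,
   i.e. lists of pairs; tens_eq is the congruence presenting the tensor
   product (free abelian monoid on pairs modulo biadditivity, R-balancedness
   and 0 (x) s = 0; the quotient is a group, namely R[[t]] (x)_R S). *)
Definition tensor := seq (pseries R * S).

Inductive tens_eq : tensor -> tensor -> Prop :=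
| te_refl l : tens_eq l l
| te_sym l1 l2 : tens_eq l1 l2 -> tens_eq l2 l1
| te_trans l1 l2 l3 : tens_eq l1 l2 -> tens_eq l2 l3 -> tens_eq l1 l3
| te_catl l1 l2 l3 : tens_eq l1 l2 -> tens_eq (l3 ++ l1) (l3 ++ l2)
| te_catr l1 l2 l3 : tens_eq l1 l2 -> tens_eq (l1 ++ l3) (l2 ++ l3)
| te_comm l1 l2 : tens_eq (l1 ++ l2) (l2 ++ l1)
| te_addl (f g : pseries R) (s : S) :
    tens_eq [:: (fun n => f n + g n, s)] [:: (f, s); (g, s)]
| te_addr (f : pseries R) (s s' : S) :
    tens_eq [:: (f, s + s')] [:: (f, s); (f, s')]
| te_scale (r : R) (f : pseries R) (s : S) :
    tens_eq [:: (fun n => r * f n, s)] [:: (f, r *: s)]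
| te_zero (s : S) : tens_eq [:: (fun _ => 0, s)] [::].

Definition omega (l : tensor) : pseries S :=
  fun n => \sum_(p <- l) (p.1 n) *: p.2.

End Defs.

(* Main.v *)
Require Import Defs.
From HB Require Import structures.
From mathcomp Require Import all_boot all_order all_algebra.
From Stdlib Require Import IndefiniteDescription FunctionalExtensionality.
Import Order.TTheory GRing.Theory Num.Theory.
Local Open Scope ring_scope.

Section Helpers.
Variables (R : comPzRingType) (S : comAlgType R).
Local Notation T := (pseries R * S)%type.
Local Notation "a ~t b" := (@tens_eq R S a b) (at level 70).
Local Notation bigc := (\big[cat/[::]]_(_ <- _) _).

Lemma teq_cat (l1 l2 l3 l4 : seq T) : l1 ~t l2 -> l3 ~t l4 -> l1 ++ l3 ~t l2 ++ l4.
Proof. by move=> h1 h2; apply: te_trans (te_catr _ h1) (te_catl _ h2). Qed.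

Lemma big_teq (I : Type) (r : seq I) (P : pred I) (F G : I -> seq T) :
  (forall i, P i -> F i ~t G i) ->
  \big[cat/[::]]_(i <- r | P i) F i ~t \big[cat/[::]]_(i <- r | P i) G i.
Proof.
move=> h; apply: (big_ind2 (fun a b => a ~t b)) => //; first exact: te_refl.
exact: teq_cat.
Qed.
Arguments big_teq {I r P F G} _.

Lemma swap4 (x y z w : seq T) : (x ++ y) ++ (z ++ w) ~t (x ++ z) ++ (y ++ w).
Proof.
rewrite -!catA; apply: te_catl; rewrite !catA; apply: te_catr; exact: te_comm.
Qed.

Lemma big_split_teq (I : Type) (r : seq I) (F G : I -> seq T) :
  \big[cat/[::]]_(i <- r) (F i ++ G i) ~t
  \big[cat/[::]]_(i <- r) F i ++ \big[cat/[::]]_(i <- r) G i.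
Proof.
elim: r => [|a r IH]; first by rewrite !big_nil; exact: te_refl.
rewrite !big_cons; apply: te_trans (te_catl _ IH) _; exact: swap4.
Qed.

Lemma exch (I J : Type) (r1 : seq I) (r2 : seq J) (F : I -> J -> seq T) :
  \big[cat/[::]]_(i <- r1) \big[cat/[::]]_(j <- r2) F i j ~t
  \big[cat/[::]]_(j <- r2) \big[cat/[::]]_(i <- r1) F i j.
Proof.
elim: r1 => [|a r IH].
  rewrite big_nil; under eq_bigr do rewrite big_nil.
  rewrite big1_eq; exact: te_refl.
rewrite big_cons; apply: te_trans (te_catl _ IH) _.
under [X in _ ~t X]eq_bigr do rewrite big_cons.
apply: te_sym; exact: big_split_teq.
Qed.

Lemma merge (I : Type) (r : seq I) (f : I -> pseries R) (s : S) :
  \big[cat/[::]]_(x <- r) [:: (f x, s)] ~t [:: (fun n => \sum_(x <- r) f x n, s)].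
Proof.
elim: r => [|a r IH].
  rewrite big_nil.
  have -> : (fun n => \sum_(x <- [::]) f x n) = (fun _ => 0).
    by apply: functional_extensionality => n; rewrite big_nil.
  apply: te_sym; exact: te_zero.
rewrite big_cons; apply: te_trans (te_catl _ IH) _.
have -> : (fun n => \sum_(x <- a :: r) f x n) = (fun n => f a n + \sum_(x <- r) f x n).
  by apply: functional_extensionality => n; rewrite big_cons.
apply: te_sym; exact: te_addl.
Qed.

Lemma zero_teq (f : pseries R) : [:: (f, 0 : S)] ~t [::].
Proof.
have h := te_scale 0 f (0 : S).
rewrite scaler0 in h.
apply: te_trans (te_sym h) _.
have -> : (fun n => 0 * f n) = (fun _ => 0 : R).
  by apply: functional_extensionality => n; rewrite mul0r.
exact: te_zero.
Qed.

Lemma expand' (I : Type) (r : seq I) (f : pseries R) (s : I -> S) :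
  [:: (f, \sum_(i <- r) s i)] ~t \big[cat/[::]]_(i <- r) [:: (f, s i)].
Proof.
elim: r => [|a r IH]; first by rewrite !big_nil; exact: zero_teq.
rewrite !big_cons; apply: te_trans (te_addr f (s a) (\sum_(i <- r) s i)) _.
exact: (te_catl [:: (f, s a)] IH).
Qed.

Lemma expand (I : Type) (r : seq I) (f : pseries R) (c : I -> R) (m : I -> S) :
  [:: (f, \sum_(i <- r) c i *: m i)] ~t
  \big[cat/[::]]_(i <- r) [:: (fun n => c i * f n, m i)].
Proof.
apply: te_trans (@expand' _ r f (fun i => c i *: m i)) _; apply: big_teq => i _.
apply: te_sym; exact: te_scale.
Qed.

Definition tneg (l : seq T) : seq T := map (fun p => (fun n => - p.1 n, p.2)) l.

Lemma tneg_cancel (l : seq T) : l ++ tneg l ~t [::].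
Proof.
elim: l => [|[f s] l IH]; first exact: te_refl.
rewrite /=.
set q := (fun n => - (f, s).1 n, (f, s).2).
apply: te_trans (_ : [:: (f, s); q] ++ (l ++ tneg l) ~t _).
  apply: (te_catl [:: (f, s)]).
  have H (a b c : seq T) : a ++ (b ++ c) ~t b ++ (a ++ c).
    by rewrite !catA; apply: te_catr; exact: te_comm.
  exact: (H l [:: q] (tneg l)).
apply: te_trans (te_catl _ IH) _; rewrite cats0 /q /=.
apply: te_trans (te_sym (te_addl _ _ _)) _.
have -> : (fun n => f n + - f n) = (fun _ => 0 : R).
  by apply: functional_extensionality => n; rewrite subrr.
exact: te_zero.
Qed.

Lemma omega_cat (l1 l2 : seq T) n : omega (l1 ++ l2) n = omega l1 n + omega l2 n.
Proof. by rewrite /omega big_cat. Qed.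

Lemma omega_big (I : Type) (r : seq I) (F : I -> seq T) n :
  omega (\big[cat/[::]]_(i <- r) F i) n = \sum_(i <- r) omega (F i) n.
Proof.
apply: (big_morph (fun l : seq T => omega l n)).
  by move=> x y; exact: omega_cat.
by rewrite /omega big_nil.
Qed.

Lemma omega_single (p : T) n : omega [:: p] n = p.1 n *: p.2.
Proof. by rewrite /omega big_seq1. Qed.

Lemma omega_tneg (l : seq T) n : omega (tneg l) n = - omega l n.
Proof. by rewrite /omega big_map -sumrN; apply: eq_bigr => p _; rewrite scaleNr. Qed.

Lemma omega_inv (l1 l2 : seq T) : l1 ~t l2 -> forall n, omega l1 n = omega l2 n.
Proof.
move=> h; induction h => //=.
- by move=> n; rewrite IHh1 IHh2.
- by move=> n; rewrite !omega_cat IHh.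
- by move=> n; rewrite !omega_cat IHh.
- by move=> n; rewrite !omega_cat addrC.
- by move=> n; rewrite /omega !big_cons !big_nil /= scalerDl !addr0.
- by move=> n; rewrite /omega !big_cons !big_nil /= scalerDr !addr0.
- by move=> n; rewrite /omega !big_cons !big_nil /= scalerA mulrC.
- by move=> n; rewrite /omega !big_cons !big_nil /= scale0r !addr0.
Qed.

Lemma nth_decomp (l : seq T) (p0 : T) :
  l = \big[cat/[::]]_(k < size l) [:: ((nth p0 l k).1, (nth p0 l k).2)].
Proof.
have -> : \big[cat/[::]]_(k < size l) [:: ((nth p0 l k).1, (nth p0 l k).2)]
        = \big[cat/[::]]_(k < size l) [:: nth p0 l k].
  by apply: eq_bigr => k _; case: (nth p0 l k).
rewrite -(big_mkord xpredT (fun k => [:: nth p0 l k])) -(big_nth p0 xpredT (fun x => [:: x])).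
by elim: l => [|x l IH]; rewrite ?big_nil ?big_cons -?IH.
Qed.

Lemma core
  (Hfp : forall M : S -> Prop, fg_submod M ->
      exists N : S -> Prop, fp_submod N /\ forall x, M x -> N x)
  (l : seq T) : (forall n, omega l n = 0) -> l ~t [::].
Proof.
move=> Hl.
pose p0 : T := (fun _ => 0, 0).
pose K := size l.
pose sk (k : 'I_K) := (nth p0 l k).2.
pose fk (k : 'I_K) := (nth p0 l k).1.
pose M := fun x => exists c : 'I_K -> R, x = \sum_(k < K) c k *: sk k.
have fgM : fg_submod M by exists K, sk => x; split.
case: (Hfp M fgM) => N [[p [m [spN [q [rel hrel]]]]] MN].
have Nsk : forall k : 'I_K, exists a : 'I_p -> R, sk k = \sum_(i < p) a i *: m i.
  move=> k; apply/spN/MN; exists (fun j => (j == k)%:R).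
  rewrite (bigD1 k) //= eqxx scale1r big1 ?addr0 // => j /negbTE ->.
  by rewrite scale0r.
pose A k := proj1_sig (constructive_indefinite_description _ (Nsk k)).
have HA k : sk k = \sum_i A k i *: m i :=
  proj2_sig (constructive_indefinite_description _ (Nsk k)).
pose F (i : 'I_p) n := \sum_(k < K) A k i * fk k n.
have step1 : l ~t \big[cat/[::]]_(i < p) [:: (F i, m i)].
  rewrite {1}(nth_decomp l p0).
  apply: te_trans (big_teq (G := fun k : 'I_K =>
     \big[cat/[::]]_(i < p) [:: (fun n => A k i * fk k n, m i)]) _) _.
    by move=> k _; rewrite -/(sk k) (HA k); exact: expand.
  apply: te_trans (exch _ _ _ _ _) _.
  apply: big_teq => i _; exact: merge.
have omF n : \sum_(i < p) F i n *: m i = 0.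
  rewrite -[RHS](Hl n) (omega_inv _ _ step1) omega_big.
 apply: eq_bigr => i _.
  by rewrite omega_single.
have Hd n : exists d : 'I_q -> R, forall i, F i n = \sum_j d j * rel j i.
  exact: ((hrel (fun i => F i n)).1 (omF n)).
pose D j n := proj1_sig (constructive_indefinite_description _ (Hd n)) j.
have HD n i : F i n = \sum_j D j n * rel j i :=
  proj2_sig (constructive_indefinite_description _ (Hd n)) i.
have relz j : \sum_(i < p) rel j i *: m i = 0.
  apply/(hrel (rel j)).2; exists (fun j' => (j' == j)%:R) => i.
  rewrite (bigD1 j) //= eqxx mul1r big1 ?addr0 // => j' /negbTE ->.
  by rewrite mul0r.
apply: te_trans step1 _.
apply: te_trans (big_teq (G := fun i =>
   \big[cat/[::]]_(j < q) [:: (fun n => rel j i * D j n, m i)]) _) _.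
  move=> i _; apply: te_sym.
  have -> : F i = fun n => \sum_(j < q) rel j i * D j n.
    apply: functional_extensionality => n; rewrite HD.
    by apply: eq_bigr => j _; rewrite mulrC.
  exact: merge.
apply: te_trans (exch _ _ _ _ _) _.
apply: te_trans (big_teq (G := fun j =>
   [:: (D j, \sum_(i < p) rel j i *: m i)]) _) _.
  move=> j _; apply: te_sym; exact: expand.
apply: te_trans (big_teq (G := fun _ => [::]) _) _.
  by move=> j _; rewrite relz; exact: zero_teq.
rewrite big1_eq; exact: te_refl.
Qed.

End Helpers.

Theorem lemma2p4 (R : comPzRingType) (S : comAlgType R) :
  (forall g : pseries S,
     (exists l : tensor S, omega l = g) <->
     (exists M : S -> Prop, fg_submod M /\ forall n, M (g n)))
  /\
  ((forall M : S -> Prop, fg_submod M ->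
      exists N : S -> Prop, fp_submod N /\ forall x, M x -> N x) ->
   forall l1 l2 : tensor S, omega l1 = omega l2 -> tens_eq l1 l2).
Proof.
split.
- move=> g; split.
  + case=> l <-.
    pose p0 : pseries R * S := (fun _ => 0, 0).
    pose K := size l.
    pose sk (k : 'I_K) := (nth p0 l k).2.
    exists (fun x => exists c : 'I_K -> R, x = \sum_(k < K) c k *: sk k).
    split; first by exists K, sk => x; split.
    move=> n; exists (fun k => (nth p0 l k).1 n).
    by rewrite /omega (big_nth p0) big_mkord.
  + case=> M [[n [m spM]] HM].
    have H t : exists c : 'I_n -> R, g t = \sum_(i < n) c i *: m i.
      exact: (spM _).1 (HM t).
    pose C t := proj1_sig (constructive_indefinite_description _ (H t)).
    exists (\big[cat/[::]]_(i < n) [:: (fun t => C t i, m i)]).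
    apply: functional_extensionality => t.
    rewrite omega_big (proj2_sig (constructive_indefinite_description _ (H t))).
    by apply: eq_bigr => i _; rewrite omega_single.
- move=> Hfp l1 l2 Hom.
  have Hz : forall n, omega (l1 ++ @tneg R S l2) n = 0.
    by move=> n; rewrite omega_cat omega_tneg Hom subrr.
  have h := @core R S Hfp _ Hz.
  have h2 : tens_eq [::] (@tneg R S l2 ++ l2).
    apply: te_sym; apply: te_trans (te_comm _ _) (@tneg_cancel R S l2).
  apply: te_trans (_ : tens_eq l1 (l1 ++ (@tneg R S l2 ++ l2))) _.
    by rewrite -{1}(cats0 l1); exact: te_catl.
  rewrite catA; exact: (te_catr l2 h).
Qed.
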